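(* Let $G=(V,E)$ be a graph, $k$ a positive integer, $C$ a minimum vertex cover of $G$, and $I=V\setminus C$. Let $D$ be a $k$-membership dominating set of $G$. Let $C_1=D\cap C$, $I_1=I\setminus (N(C_1)\cap I)$, and $R=N(C_1)\cap I\cap D$. Then $I_1\subseteq D$, and every vertex of $C\setminus (N[C_1]\cup N(I_1))$ is dominated by $R$ (i.e. has a neighbor in $R$ or belongs to $R$).
   Context: All graphs are finite, simple and undirected. For $v\in V$, $N(v)$ and $N[v]$ are the open and closed neighborhoods; for $S\subseteq V$, $N(S)=\bigcup_{u\in S}N(u)\setminus S$ and $N[S]=\bigcup_{u\in S}N[u]$. A set $S\subseteq V$ is a dominating set if every vertex lies in $S$ or has a neighbor in $S$. The membership of $u$ in $S$ is $M(u,S)=|N[u]\cap S|$. A $k$-membership dominating set is a dominating set $S$ with $M(u,S)\le k$ for all $u\in V$. *)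

(* Defs.v *)
From mathcomp Require Import all_boot.
Set Implicit Arguments. Unset Strict Implicit. Unset Printing Implicit Defensive.

Definition simple_graph (T : finType) (e : rel T) : Prop :=
  symmetric e /\ irreflexive e.

Section Graph.
Variables (T : finType) (e : rel T).

Definition nbh (v : T) : {set T} := [set u | e v u].
Definition cnbh (v : T) : {set T} := v |: nbh v.
Definition nbhS (S : {set T}) : {set T} := (\bigcup_(u in S) nbh u) :\: S.
Definition cnbhS (S : {set T}) : {set T} := \bigcup_(u in S) cnbh u.

Definition dominating (S : {set T}) : Prop :=
  forall v : T, v \in S \/ exists2 u, u \in S & e v u.

Definition membership (u : T) (S : {set T}) : nat := #|cnbh u :&: S|.

Definition kmem_dominating (k : nat) (S : {set T}) : Prop :=
  dominating S /\ forall u : T, membership u S <= k.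

Definition vertex_cover (C : {set T}) : Prop :=
  forall u v : T, e u v -> u \in C \/ v \in C.

Definition min_vertex_cover (C : {set T}) : Prop :=
  vertex_cover C /\ forall C' : {set T}, vertex_cover C' -> #|C| <= #|C'|.

Definition dominated_by (R : {set T}) (v : T) : Prop :=
  v \in R \/ exists2 u, u \in R & e v u.
End Graph.

(* Main.v *)
Require Import Defs.
From mathcomp Require Import all_boot.

Lemma in_nbhS (T : finType) (e : rel T) (S : {set T}) x :
  x \notin S -> forall u, u \in S -> e u x -> x \in nbhS e S.
Proof.
move=> xS u uS eux; rewrite /nbhS in_setD xS /=.
by apply/bigcupP; exists u => //; rewrite /nbh inE.
Qed.

Theorem lemma6 (T : finType) (e : rel T) (k : nat) (C D : {set T}) :
  simple_graph e -> 0 < k ->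
  min_vertex_cover e C ->
  kmem_dominating e k D ->
  let I := ~: C in
  let C1 := D :&: C in
  let I1 := I :\: (nbhS e C1 :&: I) in
  let R := nbhS e C1 :&: I :&: D in
  I1 \subset D /\
  (forall v, v \in C :\: (cnbhS e C1 :|: nbhS e I1) -> dominated_by e R v).
Proof.
move=> [esym eirr] _ [VC _] [dom _] I C1 I1 R.
have hI1 : I1 \subset D.
  apply/subsetP => v; rewrite in_setD in_setC => /andP [hn vC].
  case: (dom v) => // [[u uD evu]].
  have uC : u \in C by case: (VC v u evu) => // h; rewrite h in vC.
  have : v \in nbhS e C1.
    apply: (@in_nbhS _ _ _ _ _ u); first by rewrite !inE (negbTE vC) andbF.
    by rewrite !inE uD uC. by rewrite esym.
  by move=> h; move: hn; rewrite in_setI h in_setC vC.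
split => // v; rewrite in_setD in_setU negb_or => /andP [/andP [hc hi] vC].
have vC1 : v \notin C1.
  apply/negP => h; move/negP: hc; apply; apply/bigcupP; exists v => //.
  by rewrite /cnbh !inE eqxx.
have vD : v \notin D by move: vC1; rewrite !inE vC andbT.
case: (dom v) => [h|[u uD evu]]; first by rewrite h in vD.
right; exists u => //.
have uC : u \notin C.
  apply/negP => uC; move/negP: hc; apply; apply/bigcupP; exists u.
    by rewrite !inE uD uC.
  by rewrite /cnbh !inE esym evu orbT.
have uN : u \in nbhS e C1.
  apply/negPn/negP => h.
  have uI1 : u \in I1 by rewrite in_setD in_setI (negbTE h) in_setC uC.
  move/negP: hi; apply; apply: (@in_nbhS _ _ _ _ _ u) => //.
    by rewrite !inE vC andbF.
  by rewrite esym.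
by rewrite !in_setI uN in_setC uC uD.
Qed.
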